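(* Let $D$ be a strict, asymmetric digraph of order $n$. Then the number $c(L(D))$ of connected components of $L(D)$ satisfies $c(L(D))\le f(n)$, where $f(n)=\frac{n^2-1}{4}$ if $n$ is odd and $f(n)=\frac{n^2}{4}$ if $n$ is even. Moreover, equality holds if and only if either $D$ is the transitive tournament of order $3$, or there is a partition $V(D)=X\cup Y$ with $\big||X|-|Y|\big|\le 1$ such that $A(D)=\{(x,y): x\in X,\ y\in Y\}$ (i.e. $D$ is the orientation of the balanced complete bipartite graph on $X,Y$ with all arcs directed from $X$ to $Y$).
   Context: A digraph is strict if it has no loops and no parallel arcs, and asymmetric if $(u,v)\in A(D)$ implies $(v,u)\notin A(D)$. For a digraph $D$, the line graph $L(D)$ is the graph with vertex set $A(D)$ in which two distinct arcs are adjacent if and only if the head of one is the tail of the other. A tournament is an orientation of a complete graph; it is transitive if it has no directed cycle. *)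

(* Defs.v *)
From mathcomp Require Import all_boot.
Set Implicit Arguments. Unset Strict Implicit. Unset Printing Implicit Defensive.

(* A digraph on a finite vertex type T is an arc relation D : rel T
   ((u,v) is an arc iff D u v); parallel arcs are impossible by construction. *)
Definition strict_digraph (T : finType) (D : rel T) : Prop := forall x, ~~ D x x.
Definition asymmetric (T : finType) (D : rel T) : Prop :=
  forall u v, D u v -> ~~ D v u.

Definition arc (T : finType) (D : rel T) : finType := {a : T * T | D a.1 a.2}.
Arguments arc {T} D.

Definition line_adj (T : finType) (D : rel T) : rel (arc D) :=
  fun a b => (a != b) && (((val a).2 == (val b).1) || ((val b).2 == (val a).1)).
Arguments line_adj {T} D.

Definition num_components (T : finType) (D : rel T) : nat :=
  n_comp (line_adj D) predT.

Definition f (n : nat) : nat := if odd n then (n ^ 2 - 1) %/ 4 else n ^ 2 %/ 4.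

Definition tournament (T : finType) (D : rel T) : Prop :=
  forall x y, x != y -> D x y || D y x.
Definition acyclic (T : finType) (D : rel T) : Prop :=
  forall x y, D x y -> ~~ connect D y x.
Definition transitive_tournament_of_order3 (T : finType) (D : rel T) : Prop :=
  [/\ #|T| = 3, strict_digraph D, tournament D & acyclic D].

Definition balanced_bipartite_X_to_Y (T : finType) (D : rel T) : Prop :=
  exists X : {set T},
    [/\ #|X| <= #|~: X| + 1, #|~: X| <= #|X| + 1 &
        forall x y, D x y = (x \in X) && (y \in ~: X)].

(* Main.v *)
Require Import Defs.
From mathcomp Require Import all_boot.
From mathcomp Require Import zify.

Lemma fE n : f n = n./2 * (n - n./2).
Proof. rewrite /f. have := odd_double_half n. set k := n./2.
case: ifP => Ho /=; rewrite !(_ : forall m, m ^ 2 = m * m) //; move=> Hn.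
- rewrite -Hn. rewrite (_ : (1 + k.*2) * (1 + k.*2) - 1 = (k*(k+1))*4); last by lia.
  rewrite mulnK //. lia.
- rewrite -Hn (_ : k.*2 * k.*2 = (k*k)*4); last by lia. rewrite mulnK //. lia.
Qed.

Lemma f_ub a b n : a + b <= n -> a * b <= f n.
Proof. rewrite fE. have := odd_double_half n. set h := n./2. move=> Hn H.
have Q : 4 * (a * b) + (a - b) * (a - b) + (b - a) * (b - a) = (a + b) * (a + b) by nia.
have : (a + b) * (a + b) <= n * n by apply: leq_mul.
case: (odd n) Hn => /= Hn; nia. Qed.

Lemma f_eq a b n : 2 <= n -> a + b <= n -> f n <= a * b -> [/\ a + b = n, a <= b + 1 & b <= a + 1].
Proof. rewrite fE. have := odd_double_half n. set h := n./2. move=> Hn H1 H2 H3.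
have Q : 4 * (a * b) + (a - b) * (a - b) + (b - a) * (b - a) = (a + b) * (a + b) by nia.
have Hab : a + b = n.
  apply/eqP; rewrite eqn_leq H2 /=; apply/negP => /negP; rewrite -ltnNge => Hlt.
  have : (a + b) * (a + b) <= (n - 1) * (n - 1) by apply: leq_mul; lia.
  case: (odd n) Hn => /= Hn; nia.
split => //; case: (odd n) Hn => /= Hn; nia.
Qed.

Lemma f_eq2 a b n : a + b = n -> a <= b + 1 -> b <= a + 1 -> a * b = f n.
Proof. rewrite fE. have := odd_double_half n. case: (odd n) => /= Hn H1 H2 H3; nia. Qed.

Arguments f_ub {a b n}.
Arguments f_eq {a b n}.
Arguments f_eq2 {a b n}.

Lemma Esym (T : finType) (D : rel T) : symmetric (line_adj D).
Proof. by move=> a b; rewrite /line_adj eq_sym [X in _ && X]orbC. Qed.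

Lemma rank_connect (T : finType) (D : rel T) (r : T -> nat) :
  (forall x y, D x y -> r x < r y) -> forall x y, connect D x y -> r x <= r y.
Proof.
move=> Hr x y /connectP [s Hp ->]. elim: s x Hp => [|z s IH] x //= /andP [Dxz Hp].
exact: leq_trans (ltnW (Hr _ _ Dxz)) (IH _ Hp).
Qed.

Lemma num_compE (T : finType) (D : rel T) :
  num_components D = #|[set r : Defs.arc D | roots (line_adj D) r]|.
Proof. rewrite /num_components /n_comp_mem; apply: eq_card => r; rewrite !inE /=. by rewrite andbT. Qed.

Lemma tt3 (T : finType) (D : rel T) p q s :
  strict_digraph D -> asymmetric D -> p != q -> p != s -> q != s ->
  (forall w, [|| w == p, w == q | w == s]) -> D p q -> D p s -> D q s ->
  transitive_tournament_of_order3 D.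
Proof.
move=> Hs Ha Hpq Hps Hqs Hcov Dpq Dps Dqs.
have Dqp := negbTE (Ha _ _ Dpq). have Dsp := negbTE (Ha _ _ Dps).
have Dsq := negbTE (Ha _ _ Dqs).
have Dpp := negbTE (Hs p). have Dqq := negbTE (Hs q). have Dss := negbTE (Hs s).
have Hqp := Hpq; rewrite eq_sym in Hqp. have Hsp := Hps; rewrite eq_sym in Hsp.
have Hsq := Hqs; rewrite eq_sym in Hsq.
split => //.
- have U : uniq [:: p; q; s] by rewrite /= !inE negb_or Hpq Hps Hqs.
  transitivity #|[:: p; q; s]|; last by apply/card_uniqP.
  apply: eq_card => w; rewrite !inE; move: (Hcov w); case: (w == p) => //=; case: (w == q).
- move=> x y; move: (Hcov x) (Hcov y) => /or3P [] /eqP -> /or3P [] /eqP ->;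
  by rewrite ?eqxx ?Dpq ?Dps ?Dqs ?orbT.
- pose r w := if w == p then 0 else if w == q then 1 else 2.
  have Hr : forall x y, D x y -> r x < r y.
    move=> x y; move: (Hcov x) (Hcov y) => /or3P [] /eqP -> /or3P [] /eqP ->;
    by rewrite /r ?eqxx ?Dpp ?Dqq ?Dss ?Dqp ?Dsp ?Dsq ?(negbTE Hqp) ?(negbTE Hsp) ?(negbTE Hsq).
  move=> x y Dxy; apply/negP => /(@rank_connect _ _ _ Hr); by rewrite leqNgt Hr.
Qed.

Lemma tt_two (T : finType) (D : rel T) p q s :
  strict_digraph D -> asymmetric D -> p != q -> p != s -> q != s ->
  (forall w, [|| w == p, w == q | w == s]) -> D p q -> D p s -> D q s ->
  2 <= num_components D.
Proof.
move=> Hs Ha Hpq Hps Hqs Hcov Dpq Dps Dqs.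
have Dqp := negbTE (Ha _ _ Dpq). have Dsp := negbTE (Ha _ _ Dps).
have Dsq := negbTE (Ha _ _ Dqs).
have Dpp := negbTE (Hs p). have Dqq := negbTE (Hs q). have Dss := negbTE (Hs s).
have Esy : connect_sym (line_adj D) := sym_connect_sym (@Esym T D).
pose ep : Defs.arc D := exist _ (p, s) Dps.
pose eq : Defs.arc D := exist _ (p, q) Dpq.
have Iso : forall x, ~~ line_adj D ep x.
  move=> x; rewrite /line_adj negb_and; apply/orP; right.
  case: x => [[a b] /= Dab]; apply/norP; split; apply/negP => /eqP Hx.
  - subst a; move: Dab; case/or3P: (Hcov b) => /eqP ->; by rewrite ?Dsp ?Dsq ?Dss.
  - subst b; move: Dab; case/or3P: (Hcov a) => /eqP ->; by rewrite ?Dpp ?Dqp ?Dsp.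
have Conn : forall x, connect (line_adj D) ep x -> x = ep.
  move=> x /connectP [[|z t] /= Hp ->] //. by move: Hp; rewrite (negbTE (Iso z)).
have Rep : root (line_adj D) ep = ep by apply: Conn; apply: connect_root.
have Hne : root (line_adj D) eq != ep.
  apply/eqP => Hr. have := connect_root (line_adj D) eq; rewrite Hr Esy => /Conn.
  move/(congr1 val) => /= [] Hq; by rewrite Hq eqxx in Hqs.
rewrite num_compE.
have <- : #|[set ep; root (line_adj D) eq]| = 2 by rewrite cards2 eq_sym Hne.
apply: subset_leq_card; apply/subsetP => x; rewrite !inE => /orP [] /eqP ->.
- by rewrite /roots Rep.
- exact: roots_root.
Qed.

Lemma bip_comp (T : finType) (D : rel T) :
  balanced_bipartite_X_to_Y D -> num_components D = f #|T|.
Proof.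
case=> X [H1 H2 HD].
have E0 : forall a b, ~~ line_adj D a b.
  move=> [[a1 a2] Ha] [[b1 b2] Hb]; rewrite /line_adj /= negb_and; apply/orP; right.
  move: Ha Hb; rewrite /= !HD !inE => /andP [Ha1 Ha2] /andP [Hb1 Hb2].
  apply/norP; split; apply/negP => /eqP E.
  - by rewrite E Hb1 in Ha2.
  - by rewrite E Ha1 in Hb2.
have Rt : forall a, roots (line_adj D) a.
  move=> a; apply/eqP; have := connect_root (line_adj D) a.
  move: (root _ a) => x /connectP [[|z t] /= Hp ->] //. by move: Hp; rewrite (negbTE (E0 _ _)).
rewrite -(@f_eq2 _ _ _ (cardsC X) H1 H2).
rewrite -cardsX num_compE.
transitivity #|[pred a : T * T | D a.1 a.2]|.
  transitivity #|Defs.arc D|; last exact: card_sig.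
  by apply: eq_card => a; rewrite !inE Rt.
apply: eq_card => [[x y]]; by rewrite !inE /= HD inE.
Qed.

Ltac cov_tac H :=
  solve [ done | by rewrite eq_sym
        | let w := fresh "w" in move=> w; move: (H w); by case/or3P => ->; rewrite ?orbT].

Theorem theorem2p4 (T : finType) (D : rel T) :
  strict_digraph D -> asymmetric D ->
  num_components D <= f #|T| /\
  (num_components D = f #|T| <->
     transitive_tournament_of_order3 D \/ balanced_bipartite_X_to_Y D).
Proof.
move=> Hs Ha.
set E := line_adj D.
have Esy : connect_sym E := sym_connect_sym (@Esym T D).
set R := [set r : Defs.arc D | roots E r].
have HR : num_components D = #|R| by rewrite num_compE.
have Rne : forall r1 r2, r1 \in R -> r2 \in R -> (val r1).2 != (val r2).1.
  move=> r1 r2 R1 R2; rewrite !inE in R1 R2; apply/negP => /eqP Heq.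
  case: (eqVneq r1 r2) => [Hr|Hne].
  - subst r2; have := valP r1; rewrite /= Heq. by rewrite (negbTE (Hs _)).
  - have HE : E r1 r2 by rewrite /E /line_adj Hne Heq eqxx.
    move: (connect1 HE); rewrite -(root_connect Esy) (eqP R1) (eqP R2).
    by rewrite (negbTE Hne).
have Rconn : forall r1 r2, r1 \in R -> r2 \in R -> connect E r1 r2 -> r1 = r2.
  move=> r1 r2 R1 R2; rewrite !inE in R1 R2.
  by rewrite -(root_connect Esy) (eqP R1) (eqP R2) => /eqP.
set Xs := [set (val r).1 | r in R]. set Ys := [set (val r).2 | r in R].
have Hdis : [disjoint Xs & Ys].
  apply/pred0P => t /=; apply/andP => [[/imsetP [r1 Hr1 ->] /imsetP [r2 Hr2 Heq]]].
  by move: (Rne _ _ Hr2 Hr1); rewrite -Heq eqxx.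
have Hsub : val @: R \subset setX Xs Ys.
  apply/subsetP => p /imsetP [r Hr ->]; rewrite [val r]surjective_pairing in_setX.
  by apply/andP; split; apply/imsetP; exists r.
have HRv : #|R| = #|val @: R| by rewrite card_in_imset //; move=> ? ? _ _; apply: val_inj.
have Hab : #|R| <= #|Xs| * #|Ys| by rewrite HRv -cardsX subset_leq_card.
have HU : #|Xs :|: Ys| = #|Xs| + #|Ys|.
  by case: (leq_card_setU Xs Ys) => _; rewrite Hdis => /eqP.
have Hsum : #|Xs| + #|Ys| <= #|T| by rewrite -HU max_card.
split; first by rewrite HR; apply: leq_trans Hab _; exact: f_ub.
split; last first.
  case=> [Htt|Hb]; last exact: bip_comp.
  case: (Htt) => H3 _ Ht Hac.
  apply/eqP; rewrite eqn_leq HR (leq_trans Hab (f_ub Hsum)) /= H3 -HR.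
  rewrite (_ : f 3 = 2) //.
  have Hen : size (enum T) = 3 by rewrite -cardE H3.
  have Hu := enum_uniq T.
  have Hm : forall w, w \in enum T by move=> w; rewrite mem_enum.
  move: Hen Hu Hm; case: (enum T) => [|a [|b [|c [|]]]] //= _.
  rewrite !inE negb_or andbT => /andP [/andP [Nab Nac] Nbc] Hm.
  have Hcov : forall w, [|| w == a, w == b | w == c].
    by move=> w; move: (Hm w); rewrite !inE.
  have go : forall p q s, p != q -> p != s -> q != s ->
     (forall w, [|| w == p, w == q | w == s]) -> D p q -> D p s -> D q s ->
     2 <= num_components D := fun p q s => @tt_two T D p q s Hs Ha.
  have Eo : forall x y, x != y -> D y x = ~~ D x y.
    move=> x y Hxy; case Dxy: (D x y); first by rewrite (negbTE (Ha _ _ Dxy)).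
    by have := Ht x y Hxy; rewrite Dxy.
  have Eba := Eo _ _ Nab. have Eca := Eo _ _ Nac. have Ecb := Eo _ _ Nbc.
  case Dab: (D a b); case Dbc: (D b c); case Dac: (D a c);
  try (first [ by apply: (go a b c); (first [cov_tac Hcov | by rewrite ?Eba ?Ecb ?Eca ?Dab ?Dbc ?Dac])
             | by apply: (go a c b); (first [cov_tac Hcov | by rewrite ?Eba ?Ecb ?Eca ?Dab ?Dbc ?Dac])
             | by apply: (go b a c); (first [cov_tac Hcov | by rewrite ?Eba ?Ecb ?Eca ?Dab ?Dbc ?Dac])
             | by apply: (go b c a); (first [cov_tac Hcov | by rewrite ?Eba ?Ecb ?Eca ?Dab ?Dbc ?Dac])
             | by apply: (go c a b); (first [cov_tac Hcov | by rewrite ?Eba ?Ecb ?Eca ?Dab ?Dbc ?Dac])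
             | by apply: (go c b a); (first [cov_tac Hcov | by rewrite ?Eba ?Ecb ?Eca ?Dab ?Dbc ?Dac]) ]).
  - have := Hac c a; rewrite Eca Dac => /(_ isT); rewrite (connect_trans (connect1 Dab) (connect1 Dbc)) //.
  - have Dcb : D c b by rewrite Ecb Dbc.
    have := Hac b a; rewrite Eba Dab => /(_ isT); rewrite (connect_trans (connect1 Dac) (connect1 Dcb)) //.
move=> Heq.
case: (leqP #|T| 1) => Hn.
  right; exists set0; split; first by rewrite cards0.
    by rewrite setC0 cardsT cards0.
  move=> x y; rewrite inE /=; case Dxy: (D x y) => //; exfalso.
  have Nxy : x != y by apply: contraTneq Dxy => ->; exact: Hs.
  by have := max_card [set x; y]; rewrite cards2 Nxy => /leq_trans /(_ Hn).
have Hfab : f #|T| <= #|Xs| * #|Ys| by rewrite -Heq HR.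
have [Hn' Hb1 Hb2] := f_eq Hn Hsum Hfab.
have HvR : val @: R = setX Xs Ys.
  apply/eqP; rewrite eqEcard Hsub cardsX (f_eq2 Hn' Hb1 Hb2) -Heq HR HRv leqnn //.
have HUT : Xs :|: Ys = setT.
  by apply/eqP; rewrite eqEcard subsetT cardsT HU Hn' leqnn.
have HY : forall t, (t \in Ys) = (t \notin Xs).
  move=> t; case Ht: (t \in Xs) => /=; first by rewrite (disjointFr Hdis Ht).
  have : t \in Xs :|: Ys by rewrite HUT inE.
  by rewrite inE Ht.
have Hcomp : forall x y, x \in Xs -> y \notin Xs -> exists2 r, r \in R & val r = (x, y).
  move=> x y Hx Hy; have : (x, y) \in setX Xs Ys by rewrite in_setX Hx HY Hy.
  by rewrite -HvR => /imsetP [r Hr Hv]; exists r.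
have Dcomp : forall x y, x \in Xs -> y \notin Xs -> D x y.
  move=> x y Hx Hy; have [r _ Hv] := Hcomp x y Hx Hy; by have := valP r; rewrite /= Hv.
case: (boolP [exists u, exists v, [&& D u v, u \in Xs & v \in Xs]]) =>
   [/existsP [u /existsP [v /and3P [Duv Hu Hv]]]|NA].
  left.
  have Nuv : u != v by apply: contraTneq Duv => ->; exact: Hs.
  pose e : Defs.arc D := exist _ (u, v) Duv.
  have Ee : forall r y, val r = (v, y) -> y \notin Xs -> E e r.
    move=> r y Hr Hy; rewrite /E /line_adj -(inj_eq val_inj) Hr /= eqxx /= andbT.
    apply/negP => /eqP [] _ Hvy; by rewrite -Hvy Hv in Hy.
  have Ycov0 : forall y1 y2, y1 \notin Xs -> y2 \notin Xs -> y1 = y2.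
    move=> y1 y2 H1 H2.
    have [r1 Hr1 Hv1] := Hcomp v y1 Hv H1. have [r2 Hr2 Hv2] := Hcomp v y2 Hv H2.
    have C : connect E r1 r2.
      apply: (connect_trans (_ : connect E r1 e)).
        by rewrite Esy; apply: connect1; exact: Ee Hv1 H1.
      by apply: connect1; exact: Ee Hv2 H2.
    have Hr12 := Rconn _ _ Hr1 Hr2 C.
    rewrite Hr12 Hv2 in Hv1. by case: Hv1.
  have Xs2 : [set u; v] \subset Xs by apply/subsetP => w; rewrite !inE => /orP [] /eqP ->.
  have ca : 2 <= #|Xs| by have := subset_leq_card Xs2; rewrite cards2 Nuv.
  have [y Hy] : exists y, y \in Ys by apply/card_gt0P; lia.
  have Hy' : y \notin Xs by rewrite -HY.
  have Ycov : forall w, w \notin Xs -> w = y by move=> w Hw; apply: Ycov0.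
  have cb : #|Ys| <= 1.
    rewrite -(cards1 y); apply: subset_leq_card; apply/subsetP => w.
    by rewrite HY inE => /Ycov ->.
  have XsE : Xs = [set u; v] by apply/eqP; rewrite eq_sym eqEcard Xs2 cards2 Nuv; lia.
  apply: (@tt3 T D u v y Hs Ha Nuv).
  - by apply: (contraNneq _ Hy') => <-.
  - by apply: (contraNneq _ Hy') => <-.
  - move=> w; case: (boolP (w \in Xs)); first by rewrite XsE !inE => /orP [] ->; rewrite ?orbT.
    by move/Ycov => ->; rewrite eqxx !orbT.
  - exact: Duv.
  - exact: Dcomp Hu Hy'.
  - exact: Dcomp Hv Hy'.
case: (boolP [exists u, exists v, [&& D u v, u \notin Xs & v \notin Xs]]) =>
   [/existsP [u /existsP [v /and3P [Duv Hu Hv]]]|NB].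
  left.
  have Nuv : u != v by apply: contraTneq Duv => ->; exact: Hs.
  pose e : Defs.arc D := exist _ (u, v) Duv.
  have Ee : forall r x, val r = (x, u) -> x \in Xs -> E r e.
    move=> r x Hr Hx; rewrite /E /line_adj -(inj_eq val_inj) Hr /= eqxx /= andbT.
    apply/negP => /eqP [] Hxu _; by rewrite Hxu (negbTE Hu) in Hx.
  have Xcov0 : forall x1 x2, x1 \in Xs -> x2 \in Xs -> x1 = x2.
    move=> x1 x2 H1 H2.
    have [r1 Hr1 Hv1] := Hcomp x1 u H1 Hu. have [r2 Hr2 Hv2] := Hcomp x2 u H2 Hu.
    have C : connect E r1 r2.
      apply: (connect_trans (_ : connect E r1 e)).
        by apply: connect1; exact: Ee Hv1 H1.
      by rewrite Esy; apply: connect1; exact: Ee Hv2 H2.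
    have Hr12 := Rconn _ _ Hr1 Hr2 C.
    rewrite Hr12 Hv2 in Hv1. by case: Hv1.
  have Ys2 : [set u; v] \subset Ys by apply/subsetP => w; rewrite !inE HY => /orP [] /eqP ->.
  have cb : 2 <= #|Ys| by have := subset_leq_card Ys2; rewrite cards2 Nuv.
  have [x Hx] : exists x, x \in Xs by apply/card_gt0P; lia.
  have Xcov : forall w, w \in Xs -> w = x by move=> w Hw; apply: Xcov0.
  have ca : #|Xs| <= 1.
    rewrite -(cards1 x); apply: subset_leq_card; apply/subsetP => w.
    by move/Xcov => ->; rewrite inE.
  have YsE : Ys = [set u; v] by apply/eqP; rewrite eq_sym eqEcard Ys2 cards2 Nuv; lia.
  apply: (@tt3 T D x u v Hs Ha).
  - by apply: (contraNneq _ Hu) => <-.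
  - by apply: (contraNneq _ Hv) => <-.
  - exact: Nuv.
  - move=> w; case: (boolP (w \in Xs)); first by move/Xcov => ->; rewrite eqxx.
    by rewrite -HY YsE !inE => /orP [] ->; rewrite ?orbT.
  - exact: Dcomp Hx Hu.
  - exact: Dcomp Hx Hv.
  - exact: Duv.
right; exists Xs.
have CY : #|~: Xs| = #|Ys| by apply: eq_card => t; rewrite !inE HY.
split; rewrite ?CY //.
move=> x y; rewrite inE; case Hx: (x \in Xs); case Hy: (y \in Xs) => /=.
- apply/negP => Dxy; move/negP: NA; apply; apply/existsP; exists x; apply/existsP; exists y.
  by rewrite Dxy Hx Hy.
- by apply: Dcomp; rewrite ?Hx ?Hy.
- apply/negP => Dxy; have := Ha _ _ Dxy; by rewrite Dcomp ?Hy ?Hx.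
- apply/negP => Dxy; move/negP: NB; apply; apply/existsP; exists x; apply/existsP; exists y.
  by rewrite Dxy Hx Hy.
Qed.
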